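(* Let $F,G:[0,T]\to\mathbb{R}^{D\times D}$ be continuous, and let $\Psi(t,s)$ be the transition matrix of $F$. Let $\Sigma_\tau$ solve $\frac{d\Sigma_\tau}{d\tau}=F_\tau\Sigma_\tau+\Sigma_\tau F_\tau^T+G_\tau G_\tau^T$, and let $I\subseteq[0,T]$ be an interval on which $\Sigma_\tau$ is positive definite. Let $R_\tau$ be continuously differentiable and invertible on $I$ with $R_\tau R_\tau^T=\Sigma_\tau$ and $\frac{dR_\tau}{d\tau}=(F_\tau+\tfrac12G_\tau G_\tau^T\Sigma_\tau^{-1})R_\tau$. Take $\lambda=0$: let $\hat\Psi$ be the transition matrix of $\hat F_\tau=F_\tau+\tfrac12G_\tau G_\tau^T\Sigma_\tau^{-1}$, and let $P_{s\tau}$ solve $\frac{dP_{s\tau}}{d\tau}=\hat F_\tau P_{s\tau}+P_{s\tau}\hat F_\tau^T$ with $P_{ss}=0$. Then for all $s,t\in I$, all $u(s)\in\mathbb{R}^D$ and all $\epsilon\in\mathbb{R}^D$, we have $P_{st}=0$ and $$\Psi(t,s)u(s)+[\hat\Psi(t,s)-\Psi(t,s)]R_s\epsilon=\Psi(t,s)u(s)+\Big[\int_s^t\tfrac12\Psi(t,\tau)G_\tau G_\tau^TR_\tau^{-T}\,d\tau\Big]\epsilon.$$ That is, the stochastic generalized-DDIM update $u(t)\sim\mathcal{N}(\Psi(t,s)u(s)+[\hat\Psi(t,s)-\Psi(t,s)]R_s\epsilon,P_{st})$ reduces to the deterministic generalized-DDIM update $u(t)=\Psi(t,s)u(s)+[\int_s^t\tfrac12\Psi(t,\tau)G_\tau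 G_\tau^TR_\tau^{-T}d\tau]\epsilon$.
   Context: The transition matrix $\Psi$ of $F$ satisfies $\partial_t\Psi(t,s)=F_t\Psi(t,s)$ with $\Psi(s,s)=I_D$, and similarly for $\hat\Psi$ with $\hat F$. The vector $\epsilon$ plays the role of the network output $\epsilon_\theta(u(s),s)$. *)

(* Defs.v *)
From HB Require Import structures.
From mathcomp Require Import all_boot all_order all_algebra.
From mathcomp Require Import all_classical all_reals all_analysis.
Set Implicit Arguments. Unset Strict Implicit. Unset Printing Implicit Defensive.
Import Order.TTheory GRing.Theory Num.Theory.
Import numFieldNormedType.Exports.
Local Open Scope classical_set_scope.
Local Open Scope ring_scope.

(* Derivative of a vector-valued function of a real variable relative to a
   set A (one-sided at endpoints of an interval): the difference quotients
   h^-1 (f(x+h) - f x), for h -> 0, h <> 0, x + h in A, converge to df. *)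
Definition has_deriv_within {R : realType} {V : normedModType R}
  (A : set R) (f : R -> V) (x : R) (df : V) : Prop :=
  (fun h : R => h^-1 *: (f (x + h) - f x))
    @ within (fun h => A (x + h)) (0 : R)^' --> df.

Definition oint {R : realType} (a b : R) (g : R -> R) : R :=
  if a <= b then (\int[lebesgue_measure]_(x in `[a, b]) g x)%R
  else (- \int[lebesgue_measure]_(x in `[b, a]) g x)%R.

Definition mxint {R : realType} {m n : nat} (a b : R)
  (f : R -> 'M[R]_(m, n)) : 'M[R]_(m, n) :=
  \matrix_(i, j) oint a b (fun x => f x i j).

Definition posdef {R : realType} {n : nat} (A : 'M[R]_n) : Prop :=
  A^T = A /\ forall v : 'cV[R]_n, v != 0 -> 0 < (v^T *m A *m v) 0 0.

(* Main.v *)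
Require Import Defs.
From HB Require Import structures.
From mathcomp Require Import all_boot all_order all_algebra.
From mathcomp Require Import all_classical all_reals all_analysis.
From mathcomp Require Import lra.
Import Order.TTheory GRing.Theory Num.Theory.
Import numFieldNormedType.Exports.
Local Open Scope classical_set_scope.
Local Open Scope ring_scope.
Set Implicit Arguments. Unset Strict Implicit.
Section C1.
Variable R : realType.
Context {T : Type} {F : set_system T} {FF : Filter F}.

Lemma cvg_mxP m n (f : T -> 'M[R]_(m,n)) (L : 'M[R]_(m,n)) :
  f @ F --> L <-> forall i j, (fun x => f x i j) @ F --> L i j.
Proof.
split.
  move=> H i j; exact: (cvg_comp _ _ H (@coord_continuous R m n i j L)).
move=> H; apply/cvgrPdist_lt => e e0.
have: \forall x \near F, forall ij : 'I_m * 'I_n, `|L ij.1 ij.2 - f x ij.1 ij.2| < e.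
  apply: (@filter_forall T _ (fun ij x => `|L ij.1 ij.2 - f x ij.1 ij.2| < e) F FF) => -[i j].
  exact: (proj1 (cvgrPdist_lt _ _) (H i j) e e0).
apply: filterS => x Hx.
rewrite [X in X < _]/Num.Def.normr /= mx_normrE; apply: bigmax_lt => // ij _.
by rewrite !mxE; exact: Hx.
Qed.

Lemma cvg_mulmx m n p (f : T -> 'M[R]_(m,n)) (g : T -> 'M[R]_(n,p)) (A : 'M[R]_(m,n)) (B : 'M[R]_(n,p)) :
  f @ F --> A -> g @ F --> B -> (fun x => f x *m g x) @ F --> A *m B.
Proof.
move=> /cvg_mxP Hf /cvg_mxP Hg; apply/cvg_mxP => i j.
have -> : (fun x => (f x *m g x) i j) = (fun x => \sum_k f x i k * g x k j).
  by apply/funext => x; rewrite mxE.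
rewrite mxE; apply: cvg_big => //; first exact: add_continuous.
by move=> k _; apply: cvgM; [exact: Hf| exact: Hg].
Qed.

Lemma cvg_trmx m n (f : T -> 'M[R]_(m,n)) (A : 'M[R]_(m,n)) :
  f @ F --> A -> (fun x => (f x)^T) @ F --> A^T.
Proof.
move=> /cvg_mxP Hf; apply/cvg_mxP => i j.
have -> : (fun x => (f x)^T i j) = (fun x => f x j i) by apply/funext => x; rewrite mxE.
by rewrite mxE.
Qed.

Lemma cvg_det n (f : T -> 'M[R]_n) (A : 'M[R]_n) :
  f @ F --> A -> (fun x => \det (f x)) @ F --> \det A.
Proof.
move=> /cvg_mxP Hf.
rewrite /determinant.
apply: cvg_big => //; first exact: add_continuous.
move=> s _; apply: cvgM; first exact: cvg_cst.
apply: cvg_big => //; first exact: mul_continuous.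
Qed.


Lemma cvg_adj n (f : T -> 'M[R]_n) (A : 'M[R]_n) :
  f @ F --> A -> (fun x => \adj (f x)) @ F --> \adj A.
Proof.
move=> Hf; apply/cvg_mxP => i j.
have -> : (fun x => \adj (f x) i j) = (fun x => (-1) ^+ (j + i) * \det (row' j (col' i (f x)))).
  by apply/funext => x; rewrite mxE.
rewrite mxE; apply: cvgM; first exact: cvg_cst.
apply: cvg_det; apply/cvg_mxP => k l.
have -> : (fun x => row' j (col' i (f x)) k l) = (fun x => f x (lift j k) (lift i l)).
  by apply/funext => x; rewrite !mxE.
rewrite !mxE; by move/cvg_mxP : Hf; apply.
Qed.

Lemma near_unitmx n (f : T -> 'M[R]_n) (A : 'M[R]_n) :
  f @ F --> A -> A \in unitmx -> \forall x \near F, f x \in unitmx.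
Proof.
move=> Hf uA; have := @cvgr_neq0 _ _ _ _ FF _ _ (cvg_det Hf).
rewrite unitmxE unitfE in uA; move=> /(_ uA).
by apply: filterS => x; rewrite unitmxE unitfE.
Qed.

Lemma cvg_invmx n (f : T -> 'M[R]_n) (A : 'M[R]_n) :
  f @ F --> A -> A \in unitmx -> (fun x => invmx (f x)) @ F --> invmx A.
Proof.
move=> Hf uA.
have E : \forall x \near F, (\det (f x))^-1 *: \adj (f x) = invmx (f x).
  by apply: filterS (near_unitmx Hf uA) => x ux; rewrite /invmx ux.
apply: cvg_trans (near_eq_cvg E) _.
rewrite /invmx uA; apply: cvgZ; last exact: cvg_adj.
apply: cvgV; last exact: cvg_det.
by rewrite unitmxE unitfE in uA.
Qed.

End C1.

Section C2.
Variable R : realType.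
Local Notation W A x := (within (fun h : R => A (x + h)) (0:R)^').

Lemma W_filter (A : set R) x : Filter (W A x).
Proof. exact: within_filter. Qed.

Ltac feedW H := repeat (match type of H with Filter _ -> _ => specialize (H (W_filter _ _)) end).

Lemma W_neq0 (A : set R) x : \forall h \near W A x, h != 0.
Proof. exact: (cvg_within _) (nbhs_dnbhs_neq 0). Qed.

Lemma W_to0 (A : set R) x : (fun h => h) @ W A x --> (0:R).
Proof. apply: cvg_trans (cvg_within _) _; exact: cvg_within. Qed.

Lemma hdw_cont0 {V : normedModType R} (A : set R) (f : R -> V) x df :
  has_deriv_within A f x df -> (fun h => f (x + h)) @ W A x --> f x.
Proof.
move=> Hd.
have H2 : (fun h => f x + h *: (h^-1 *: (f (x + h) - f x))) @ W A x --> f x + 0 *: df.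
  by apply: cvgD; [exact: cvg_cst| apply: cvgZ; [exact: W_to0|exact: Hd]].
rewrite scale0r addr0 in H2.
apply: cvg_trans H2; apply: near_eq_cvg.
apply: filterS (W_neq0 A x) => h h0 /=.
by rewrite scalerA mulfV // scale1r addrC subrK.
Qed.

Lemma hdw_sub_set {V : normedModType R} (A B : set R) (f : R -> V) x df :
  B `<=` A -> has_deriv_within A f x df -> has_deriv_within B f x df.
Proof.
move=> BA Hd; rewrite /has_deriv_within.
apply: cvg_trans Hd; apply: cvg_app; apply: (within_subset (dnbhs_filter 0)) => h /=; exact: BA.
Qed.

Lemma hdwD {V : normedModType R} (A : set R) (f g : R -> V) x df dg :
  has_deriv_within A f x df -> has_deriv_within A g x dg ->
  has_deriv_within A (fun t => f t + g t) x (df + dg).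
Proof.
move=> Hf Hg; rewrite /has_deriv_within.
have := cvgD Hf Hg; move/(_ (W_filter _ _)); apply: cvg_trans; apply: near_eq_cvg.
near=> h.
rewrite (_ : ((fun h0 : R => h0^-1 *: (f (x + h0) - f x)) + (fun h0 : R => h0^-1 *: (g (x + h0) - g x))) h = h^-1 *: (f (x + h) - f x) + h^-1 *: (g (x + h) - g x)) //.
by rewrite -scalerDr opprD addrACA.
Unshelve. all: by end_near.
Qed.

Lemma hdwN {V : normedModType R} (A : set R) (f : R -> V) x df :
  has_deriv_within A f x df -> has_deriv_within A (fun t => - f t) x (- df).
Proof.
move=> Hf; rewrite /has_deriv_within.
have := cvgN Hf; move/(_ (W_filter _ _)); apply: cvg_trans; apply: near_eq_cvg.
near=> h.
rewrite (_ : (- (fun h0 : R => h0^-1 *: (f (x + h0) - f x))) h = - (h^-1 *: (f (x + h) - f x))) //.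
by rewrite -scalerN opprD opprK addrC.
Unshelve. all: by end_near.
Qed.

Lemma hdw_cst {V : normedModType R} (A : set R) (c : V) x :
  has_deriv_within A (fun _ => c) x 0.
Proof.
rewrite /has_deriv_within subrr.
have -> : (fun h : R => h^-1 *: (0 : V)) = (fun _ => 0) by apply/funext => h; rewrite scaler0.
exact: cvg_cst.
Qed.

Lemma hdw_mulmx m n p (A : set R) (f : R -> 'M[R]_(m,n)) (g : R -> 'M[R]_(n,p)) x df dg :
  has_deriv_within A f x df -> has_deriv_within A g x dg ->
  has_deriv_within A (fun t => f t *m g t) x (df *m g x + f x *m dg).
Proof.
move=> Hf Hg; rewrite /has_deriv_within.
have H := cvgD (cvg_mulmx Hf (hdw_cont0 Hg)) (cvg_mulmx (cvg_cst (f x)) Hg).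
feedW H; rewrite addrfctE in H.
apply: cvg_trans H; apply: near_eq_cvg.
near=> h; rewrite /= -scalemxAl -scalemxAr -scalerDr; congr (_ *: _).
by rewrite mulmxBl mulmxBr addrA subrK.
Unshelve. all: by end_near.
Qed.

Lemma hdw_entry m n (A : set R) (f : R -> 'M[R]_(m,n)) x df i j :
  has_deriv_within A f x df -> has_deriv_within A (fun t => f t i j) x (df i j).
Proof.
move=> /cvg_mxP /(_ i j) H; rewrite /has_deriv_within.
apply: cvg_trans H; apply: near_eq_cvg.
by near=> h; rewrite !mxE.
Unshelve. all: by end_near.
Qed.

Lemma hdw_trmx m n (A : set R) (f : R -> 'M[R]_(m,n)) x df :
  has_deriv_within A f x df -> has_deriv_within A (fun t => (f t)^T) x df^T.
Proof.
move=> /cvg_trmx H; rewrite /has_deriv_within.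
apply: cvg_trans H; apply: near_eq_cvg.
by near=> h; rewrite linearZ /= linearB.
Unshelve. all: by end_near.
Qed.

Lemma hdw_invmx n (A : set R) (f : R -> 'M[R]_n) x df :
  f x \in unitmx -> has_deriv_within A f x df ->
  has_deriv_within A (fun t => invmx (f t)) x (- (invmx (f x) *m df *m invmx (f x))).
Proof.
move=> ux Hf; rewrite /has_deriv_within.
have Hc := hdw_cont0 Hf.
have H := cvgN (cvg_mulmx (cvg_mulmx (cvg_invmx Hc ux) Hf) (cvg_cst (invmx (f x)))).
feedW H; rewrite opprfctE in H.
apply: cvg_trans H; apply: near_eq_cvg.
apply: filterS (near_unitmx Hc ux) => h uh /=.
rewrite -scalemxAr -scalemxAl -scalerN; congr (_ *: _).
rewrite mulmxBr mulmxBl mulVmx // mul1mx mulmxK // opprB.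
reflexivity.
Qed.


Lemma near_shift0 (x : R) (P : R -> Prop) :
  (\forall h \near (0:R), P (x + h)) -> \forall y \near x, P y.
Proof.
move=> H; rewrite (near_shift 0 x); apply: filterS H => h /= Hh.
by rewrite subr0 addrC.
Qed.

Lemma near_shift0' (x : R) (P : R -> Prop) :
  (\forall y \near x, P y) -> \forall h \near (0:R), P (x + h).
Proof.
rewrite (near_shift 0 x) => H; apply: filterS H => h /=.
by rewrite subr0 addrC.
Qed.

Lemma hdw_wcont {V : normedModType R} (A : set R) (f : R -> V) x df :
  has_deriv_within A f x df -> f @ within A (nbhs x) --> f x.
Proof.
move=> /hdw_cont0 H P HP; have {}H := H P HP.
rewrite !nbhs_simpl /= in H *.
rewrite /within /= in H *.
apply: near_shift0 (fun y => A y -> P (f y)) _.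
move: H; rewrite /dnbhs /within /= => H.
have {}H : \forall h \near (0:R), h != 0 -> A (x+h) -> P (f (x+h)) := H.
apply: filterS H => h Hh Ah.
have [->|h0] := eqVneq h 0; first by rewrite addr0; exact: nbhs_singleton.
exact: Hh.
Qed.

Lemma hdw_is_derive (A : set R) (f : R -> R) x df :
  (\forall y \near x, A y) -> has_deriv_within A f x df -> is_derive x 1 f df.
Proof.
move=> Ax Hd.
have L : (fun h => h^-1 *: ((f \o shift x) (h *: 1) - f x)) @ 0^' --> df.
  move=> P HP; have {}H := Hd P HP.
  have {}H : \forall h \near (0:R), h != 0 -> A (x+h) -> P (h^-1 *: (f (x+h) - f x)) := H.
  have Ax' := near_shift0' Ax.
  have G : \forall h \near (0:R), h != 0 -> P (h^-1 *: ((f \o shift x) (h *: 1) - f x)).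
    apply: filterS2 H Ax' => h H1 H2 h0.
    by rewrite /= [h *: 1]mulr1 (addrC h x); apply: H1.
  exact: G.
split; first by apply/cvg_ex; exists df.
exact: cvg_lim L.
Qed.


Lemma wcont_sub {V : topologicalType} (A B : set R) (f : R -> V) :
  B `<=` A -> (forall x, A x -> f @ within A (nbhs x) --> f x) -> {within B, continuous f}.
Proof.
move=> BA H; apply/subspace_continuousP => x Bx.
apply: cvg_trans (H x (BA x Bx)); apply: cvg_app; exact: within_subset.
Qed.

Lemma entry_le_norm m n (M : 'M[R]_(m,n)) i j : `|M i j| <= `|M|.
Proof.
rewrite [X in _ <= X]/Num.Def.normr /= mx_normrE.
exact: (le_bigmax _ (fun ij : 'I_m * 'I_n => `|M ij.1 ij.2|) (i, j)).
Qed.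

Lemma norm_le_entries m n (M : 'M[R]_(m,n)) c :
  0 <= c -> (forall i j, `|M i j| <= c) -> `|M| <= c.
Proof.
move=> c0 H; rewrite [X in X <= _]/Num.Def.normr /= mx_normrE.
by apply: bigmax_le => // -[i j] _; exact: H.
Qed.

Lemma mvt_bound (g dg : R -> R) (u v M : R) :
  u < v -> (forall y, u < y < v -> is_derive y 1 g (dg y)) ->
  {within `[u, v]%classic, continuous g} ->
  (forall y, u < y < v -> `|dg y| <= M) -> `|g v - g u| <= M * (v - u).
Proof.
move=> uv Hd Hc Hb.
have Hd' : forall y, y \in `]u, v[ -> is_derive y 1 g (dg y).
  by move=> y; rewrite in_itv /= => /Hd.
have [xi xin ->] := MVT uv Hd' Hc.
rewrite normrM (@ger0_norm _ (v - u)); last by rewrite subr_ge0 ltW.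
apply: ler_wpM2r; first by rewrite subr_ge0 ltW.
by apply: Hb; rewrite in_itv /= in xin.
Qed.


Lemma within_restrict {V : topologicalType} (A B : set R) (f : R -> V) (x : R) (l : V) :
  B `<=` A -> f @ within A (nbhs x) --> l -> f @ within B (nbhs x) --> l.
Proof. by move=> BA H; apply: cvg_trans H; apply: cvg_app; exact: within_subset. Qed.

Lemma wcont_entry m n (B : set R) (X : R -> 'M[R]_(m,n)) i j :
  {within B, continuous X} -> {within B, continuous (fun t => X t i j)}.
Proof.
move=> /subspace_continuousP H; apply/subspace_continuousP => z Bz.
exact: (cvg_comp _ _ (H z Bz) (@coord_continuous R m n i j (X z))).
Qed.

Lemma ode_step m n (J : set R) (X : R -> 'M[R]_(m,n))
    (L : R -> 'M[R]_(m,n) -> 'M[R]_(m,n)) (a b K d : R) :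
  (forall y, a <= y <= b -> J y) ->
  (forall y, a <= y <= b -> has_deriv_within J X y (L y (X y))) ->
  (forall y, a <= y <= b -> forall Y, `|L y Y| <= K * `|Y|) ->
  0 <= K -> 0 < d -> K * d <= 2^-1 ->
  forall c, a <= c <= b -> X c = 0 ->
  forall y, a <= y <= b -> `|y - c| <= d -> X y = 0.
Proof.
move=> HJ HD HB K0 d0 Kd c cab Xc y yab yc.
have Xcont : {within `[a, b]%classic, continuous X}.
  apply/subspace_continuousP => z; rewrite /= in_itv /= => zab.
  apply: within_restrict (hdw_wcont (HD z zab)) => w /=; rewrite in_itv /=; exact: HJ.
set l := Num.max a (c - d); set r := Num.min b (c + d).
move: yc; rewrite ler_norml => /andP[yc1 yc2].
move/andP: cab => [ac cb]; move/andP: yab => [ay yb].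
have al : a <= l by rewrite /l le_max lexx.
have rb : r <= b by rewrite /r ge_min lexx.
have lc : l <= c by rewrite /l ge_max ac /=; lra.
have cr : c <= r by rewrite /r le_min cb /=; lra.
have ly : l <= y by rewrite /l ge_max ay /=; lra.
have yr : y <= r by rewrite /r le_min yb /=; lra.
have lcd : c - d <= l by rewrite /l le_max lexx orbT.
have rcd : r <= c + d by rewrite /r ge_min lexx orbT.
have Ncont : {within `[l, r]%classic, continuous (fun t => `|X t|)}.
  apply/subspace_continuousP => z; rewrite /= in_itv /= => /andP[lz zr].
  apply: cvg_norm.
  have := (proj1 (subspace_continuousP _ _) Xcont) z.
  rewrite /= in_itv /= => /(_ _).
  move=> H; apply: within_restrict (H _) => [w /=|]; rewrite ?in_itv /=.
    move=> /andP[lw wr]; apply/andP; split; lra.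
  apply/andP; split; lra.
have [p plr Hmax] := EVT_max (le_trans lc cr) Ncont.
move: plr; rewrite in_itv /= => /andP[lp pr].
have Hb : forall z, l <= z <= r -> `|X z| <= `|X p|.
  by move=> z zlr; apply: Hmax; rewrite in_itv /=.
have Np : `|X p| <= K * d * `|X p|.
  apply: norm_le_entries; first by apply: mulr_ge0 => //; apply: mulr_ge0 => //; exact: ltW.
  move=> i j.
  set g := fun t => X t i j.
  have gc : g c = 0 by rewrite /g Xc mxE.
  have Hder : forall z, l < z < r -> is_derive z 1 g ((L z (X z)) i j).
    move=> z /andP[lz zr]; apply: (hdw_is_derive (A := J)); last first.
      by apply: hdw_entry; apply: HD; apply/andP; split; lra.
    have : z \in `]l, r[ by rewrite in_itv /= lz zr.
    move/near_in_itvoo; apply: filterS => w; rewrite in_itv /= => /andP[lw wr].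
    apply: HJ; apply/andP; split; lra.
  have gcont : forall u v, l <= u -> v <= r -> {within `[u, v]%classic, continuous g}.
    move=> u v lu vr.
    have sub : `[u, v]%classic `<=` `[a, b]%classic.
      move=> w /=; rewrite !in_itv /= => /andP[uw wv]; apply/andP; split; lra.
    exact: (continuous_subspaceW sub (wcont_entry (i:=i) (j:=j) Xcont)).
  have Hdb : forall z, l <= z <= r -> `|(L z (X z)) i j| <= K * `|X p|.
    move=> z /andP[lz zr]; apply: le_trans (entry_le_norm _ i j) _.
    have zab : a <= z <= b by apply/andP; split; lra.
    apply: le_trans (HB z zab (X z)) _.
    by apply: ler_wpM2l => //; apply: Hb; apply/andP; split.
  have KX : 0 <= K * `|X p| by apply: mulr_ge0.
  case: (ltgtP c p) => [cp|pc|cpE].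
  - have Hd1 : forall z, c < z < p -> is_derive z 1 g ((L z (X z)) i j).
      by move=> z /andP[? ?]; apply: Hder; apply/andP; split; lra.
    have Hb1 : forall z, c < z < p -> `|(L z (X z)) i j| <= K * `|X p|.
      by move=> z /andP[? ?]; apply: Hdb; apply/andP; split; lra.
    have := mvt_bound cp Hd1 (gcont c p lc pr) Hb1.
    rewrite gc subr0 => H; apply: le_trans H _.
    have := normr_ge0 (X p); nra.
  - have Hd1 : forall z, p < z < c -> is_derive z 1 g ((L z (X z)) i j).
      by move=> z /andP[? ?]; apply: Hder; apply/andP; split; lra.
    have Hb1 : forall z, p < z < c -> `|(L z (X z)) i j| <= K * `|X p|.
      by move=> z /andP[? ?]; apply: Hdb; apply/andP; split; lra.
    have := mvt_bound pc Hd1 (gcont p c lp cr) Hb1.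
    rewrite gc sub0r normrN => H; apply: le_trans H _.
    have := normr_ge0 (X p); nra.
  - rewrite -cpE -/(g c) gc normr0; apply: mulr_ge0 => //; apply: mulr_ge0 => //; exact: ltW.
have Np0 : `|X p| <= 0 by have := normr_ge0 (X p); nra.
apply/eqP; rewrite -normr_le0; apply: le_trans Np0; apply: Hb.
by apply/andP; split.
Qed.


Lemma ode_zero_ab m n (J : set R) (X : R -> 'M[R]_(m,n))
    (L : R -> 'M[R]_(m,n) -> 'M[R]_(m,n)) (a b K : R) :
  (forall y, a <= y <= b -> J y) ->
  (forall y, a <= y <= b -> has_deriv_within J X y (L y (X y))) ->
  (forall y, a <= y <= b -> forall Y, `|L y Y| <= K * `|Y|) ->
  0 <= K -> forall c, a <= c <= b -> X c = 0 ->
  forall y, a <= y <= b -> X y = 0.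
Proof.
move=> HJ HD HB K0 c cab Xc.
set d := 2^-1 / (K + 1).
have K1 : 0 < K + 1 by lra.
have d0 : 0 < d by rewrite /d divr_gt0 // invr_gt0; lra.
have Kd : K * d <= 2^-1.
  rewrite /d -[X in _ <= X]mulr1 mulrCA ler_pM2l ?invr_gt0 ?ltr0n //.
  rewrite ler_pdivrMr // mul1r; lra.
have step := ode_step HJ HD HB K0 d0 Kd.
have ind : forall k : nat, forall y, a <= y <= b -> `|y - c| <= k%:R * d -> X y = 0.
  elim => [|k IH] y yab.
    rewrite mul0r normr_le0 subr_eq0 => /eqP ->; exact: Xc.
  move=> yc.
  have [ycd|ycd] := leP `|y - c| d; first exact: step cab Xc y yab ycd.
  move: yc; rewrite -natr1 mulrDl mul1r => yc.
  move/andP: yab => [ay yb]; move/andP: cab => [ac cb].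
  have [cy|yc'] := leP c y.
  - rewrite ger0_norm ?subr_ge0 // in ycd yc.
    have Xc' : X (y - d) = 0.
      apply: IH; first by apply/andP; split; lra.
      rewrite ger0_norm; lra.
    apply: (step (y - d)); [apply/andP; split; lra| exact: Xc'| apply/andP; split => //|].
    by rewrite opprB addrC subrK ger0_norm ?lexx // ltW.
  - rewrite ltr0_norm ?subr_lt0 // in ycd yc.
    have Xc' : X (y + d) = 0.
      apply: IH; first by apply/andP; split; lra.
      rewrite ltr0_norm; lra.
    apply: (step (y + d)); [apply/andP; split; lra| exact: Xc'| apply/andP; split => //|].
    by rewrite opprD addrA subrr sub0r normrN ger0_norm ?lexx // ltW.
move=> y yab.
have ba : 0 <= (b - a) / d.
  by apply: divr_ge0; [case/andP: yab => ? ?; case/andP: cab => ? ?; lra| exact: ltW].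
have := archi_boundP ba.
set k := Num.Def.archi_bound _ => Hk.
apply: (ind k y yab).
have : b - a <= k%:R * d by rewrite -ler_pdivrMr //; exact: ltW.
move: yab cab => /andP[? ?] /andP[? ?].
rewrite ler_norml; move=> H; apply/andP; split; lra.
Qed.

Lemma ode_unique m n (J : set R) (X : R -> 'M[R]_(m,n))
    (L : R -> 'M[R]_(m,n) -> 'M[R]_(m,n)) :
  is_interval J ->
  (forall y, J y -> has_deriv_within J X y (L y (X y))) ->
  (forall a b, J a -> J b -> exists K, forall y, a <= y <= b -> forall Y, `|L y Y| <= K * `|Y|) ->
  forall s t, J s -> J t -> X s = 0 -> X t = 0.
Proof.
move=> HI HD HB s t Js Jt Xs.
wlog st : s t Js Jt Xs / s <= t.
  move=> W; have [st|ts] := leP s t; first exact: (W s t).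
  pose a := t; pose b := s.
  have [K HK] := HB t s Jt Js.
  have HJ : forall y, t <= y <= s -> J y by move=> y; apply: HI.
  have := ode_zero_ab HJ (fun y yab => HD y (HJ y yab)) _ (normr_ge0 K) _ Xs.
  apply; [|apply/andP; split => //; exact: ltW|apply/andP; split => //; exact: ltW].
  move=> y yab Y; apply: le_trans (HK y yab Y) _; apply: ler_wpM2r => //; exact: ler_norm.
have [K HK] := HB s t Js Jt.
have HJ : forall y, s <= y <= t -> J y by move=> y; apply: HI.
have := ode_zero_ab HJ (fun y yab => HD y (HJ y yab)) _ (normr_ge0 K) _ Xs.
apply; [|apply/andP; split => //|apply/andP; split => //].
move=> y yab Y; apply: le_trans (HK y yab Y) _; apply: ler_wpM2r => //; exact: ler_norm.
Qed.


Lemma norm_mulmx_le m n p (A : 'M[R]_(m,n)) (B : 'M[R]_(n,p)) :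
  `|A *m B| <= n%:R * `|A| * `|B|.
Proof.
apply: norm_le_entries; first by rewrite mulr_ge0 ?mulr_ge0.
move=> i j; rewrite mxE; apply: le_trans (ler_norm_sum _ _ _) _.
rewrite -mulrA -[n in n%:R]card_ord -sumr_const mulr_suml.
apply: ler_sum => k _; rewrite normrM mul1r.
by apply: ler_pM; rewrite ?normr_ge0 ?entry_le_norm.
Qed.

Lemma norm_trmx_le m n (A : 'M[R]_(m,n)) : `|A^T| <= `|A|.
Proof.
apply: norm_le_entries => // i j; rewrite mxE; exact: entry_le_norm.
Qed.

Lemma bound_on n (J : set R) (A : R -> 'M[R]_n) :
  is_interval J -> (forall x, J x -> A @ within J (nbhs x) --> A x) ->
  forall a b, J a -> J b -> exists K, forall y, a <= y <= b -> `|A y| <= K.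
Proof.
move=> HI HA a b Ja Jb.
have [ab|ba] := leP a b; last first.
  by exists 0 => y /andP[ay yb]; have := le_trans ay yb; rewrite leNgt ba.
have sab : `[a, b]%classic `<=` J by move=> y /=; rewrite in_itv /=; apply: HI.
have Hc : {within `[a, b]%classic, continuous (fun y => `|A y|)}.
  apply/subspace_continuousP => z zab; apply: cvg_norm.
  exact: (within_restrict sab (HA _ (sab _ zab))).
have [c _ Hc'] := EVT_max ab Hc.
by exists `|A c| => y yab; apply: Hc'; rewrite in_itv.
Qed.

Lemma ode_lin n (J : set R) (A : R -> 'M[R]_n) (X : R -> 'M[R]_n) :
  is_interval J -> (forall x, J x -> A @ within J (nbhs x) --> A x) ->
  (forall y, J y -> has_deriv_within J X y (A y *m X y)) ->
  forall s t, J s -> J t -> X s = 0 -> X t = 0.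
Proof.
move=> HI HA HD.
apply: (ode_unique (L := fun y Y => A y *m Y)) => // a b Ja Jb.
have [K HK] := bound_on HI HA Ja Jb.
exists (n%:R * K) => y yab Y; apply: le_trans (norm_mulmx_le _ _) _.
apply: ler_wpM2r => //; apply: ler_wpM2l => //; exact: HK.
Qed.

Lemma ode_lyap n (J : set R) (A : R -> 'M[R]_n) (X : R -> 'M[R]_n) :
  is_interval J -> (forall x, J x -> A @ within J (nbhs x) --> A x) ->
  (forall y, J y -> has_deriv_within J X y (A y *m X y + X y *m (A y)^T)) ->
  forall s t, J s -> J t -> X s = 0 -> X t = 0.
Proof.
move=> HI HA HD.
apply: (ode_unique (L := fun y Y => A y *m Y + Y *m (A y)^T)) => // a b Ja Jb.
have [K HK] := bound_on HI HA Ja Jb.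
exists (n%:R * K + n%:R * K) => y yab Y; apply: le_trans (ler_normD _ _) _.
rewrite mulrDl; apply: lerD; apply: le_trans (norm_mulmx_le _ _) _.
  apply: ler_wpM2r => //; apply: ler_wpM2l => //; exact: HK.
rewrite -mulrA [`|Y| * _]mulrC mulrA.
apply: ler_wpM2r => //.
apply: ler_wpM2l => //; apply: le_trans (norm_trmx_le _) _; exact: HK.
Qed.


Lemma hdw_eqv {V : normedModType R} (A : set R) (f : R -> V) x df1 df2 :
  df1 = df2 -> has_deriv_within A f x df1 -> has_deriv_within A f x df2.
Proof. by move=> ->. Qed.

Lemma ftc_ab (J : set R) (Phi g : R -> R) (a b : R) : a < b ->
  (forall y, a <= y <= b -> J y) ->
  (forall x, J x -> has_deriv_within J Phi x (g x)) ->
  (forall x, J x -> g @ within J (nbhs x) --> g x) ->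
  (\int[lebesgue_measure]_(x in `[a, b]) g x)%R = Phi b - Phi a.
Proof.
move=> ab HJ HD Hg.
have sab : `[a, b]%classic `<=` J by move=> y /=; rewrite in_itv /=; exact: HJ.
have gc : {within `[a, b]%classic, continuous g} by exact: (wcont_sub sab Hg).
have Pc : {within `[a, b]%classic, continuous Phi}.
  exact: (wcont_sub sab (fun x Jx => hdw_wcont (HD x Jx))).
have Hd : forall x, a < x < b -> is_derive x 1 Phi (g x).
  move=> x xab; apply: (hdw_is_derive (A := J)); last by apply: HD; apply: sab; rewrite /= in_itv /=; case/andP: xab => ? ?; apply/andP; split; exact: ltW.
  have : x \in `]a, b[ by rewrite in_itv.
  move/near_in_itvoo; apply: filterS => w; rewrite in_itv /= => /andP[? ?].
  apply: HJ; apply/andP; split; exact: ltW.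
have [_ Pa Pb] := (continuous_within_itvP Phi ab).1 Pc.
have := @continuous_FTC2 R g Phi a b ab gc _ _.
rewrite /Rintegral => ->.
- by rewrite -EFinB.
- split => //; move=> x; rewrite in_itv /= => xab.
  by have := Hd x xab => -[].
- move=> x; rewrite in_itv /= => xab.
  by rewrite derive1E; have := Hd x xab => -[_ ->].
Qed.

Lemma ftc_oint (J : set R) (Phi g : R -> R) (s t : R) :
  is_interval J -> J s -> J t ->
  (forall x, J x -> has_deriv_within J Phi x (g x)) ->
  (forall x, J x -> g @ within J (nbhs x) --> g x) ->
  oint s t g = Phi t - Phi s.
Proof.
move=> HI Js Jt HD Hg; rewrite /oint.
case: (ltgtP s t) => [st|ts|<-].
- apply: (ftc_ab st _ HD Hg) => y; exact: HI.
- rewrite (ftc_ab ts _ HD Hg) ?opprB // => y; exact: HI.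
- by rewrite set_itv1 Rintegral_set1 subrr.
Qed.


Lemma ftc_mxint m n (J : set R) (Phi g : R -> 'M[R]_(m,n)) (s t : R) :
  is_interval J -> J s -> J t ->
  (forall x, J x -> has_deriv_within J Phi x (g x)) ->
  (forall x, J x -> g @ within J (nbhs x) --> g x) ->
  mxint s t g = Phi t - Phi s.
Proof.
move=> HI Js Jt HD Hg; apply/matrixP => i j; rewrite !mxE.
apply: (ftc_oint (J := J) (Phi := fun y => Phi y i j) (g := fun y => g y i j)) => // x Jx.
  exact: (hdw_entry (i:=i) (j:=j) (HD x Jx)).
exact: (proj1 (cvg_mxP _ _) (Hg x Jx) i j).
Qed.

Lemma cvg_near_eqw {V : topologicalType} (J : set R) (f g : R -> V) x :
  J x -> (forall y, J y -> f y = g y) ->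
  g @ within J (nbhs x) --> g x -> f @ within J (nbhs x) --> f x.
Proof.
move=> Jx E H; rewrite E //; apply: cvg_trans H; apply: near_eq_cvg.
by rewrite near_withinE; apply: nearW => y /E.
Qed.

End C2.

Unset Implicit Arguments. Unset Strict Implicit.

Theorem proposition7 (R : realType) (D : nat) (T : R)
  (F G : R -> 'M[R]_D) (Psi : R -> R -> 'M[R]_D) (Sigma : R -> 'M[R]_D)
  (I : set R) (Rm : R -> 'M[R]_D) (Psihat : R -> R -> 'M[R]_D)
  (P : R -> R -> 'M[R]_D) :
  {within `[0, T], continuous F} ->
  {within `[0, T], continuous G} ->
  (* Psi is the transition matrix of F *)
  (forall s t, s \in `[0, T] -> t \in `[0, T] ->
     has_deriv_within `[0, T] (fun t' => Psi t' s) t (F t *m Psi t s)) ->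
  (forall s, s \in `[0, T] -> Psi s s = 1%:M) ->
  (* Sigma solves the covariance ODE *)
  (forall tau, tau \in `[0, T] ->
     has_deriv_within `[0, T] Sigma tau
       (F tau *m Sigma tau + Sigma tau *m (F tau)^T + G tau *m (G tau)^T)) ->
  (* I is an interval in [0,T] on which Sigma is positive definite *)
  is_interval I -> I `<=` `[0, T] ->
  (forall tau, I tau -> posdef (Sigma tau)) ->
  (* Rm : continuously differentiable, invertible square root of Sigma *)
  (forall tau, I tau -> Rm tau \in unitmx) ->
  (forall tau, I tau -> Rm tau *m (Rm tau)^T = Sigma tau) ->
  (forall tau, I tau ->
     has_deriv_within I Rm tau
       ((F tau + 2^-1 *: (G tau *m (G tau)^T *m invmx (Sigma tau))) *m Rm tau)) ->
  {within I, continuous (fun tau =>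
     (F tau + 2^-1 *: (G tau *m (G tau)^T *m invmx (Sigma tau))) *m Rm tau)} ->
  (* Psihat is the transition matrix of Fhat = F + 1/2 G G^T Sigma^-1 (lambda = 0) *)
  (forall s t, I s -> I t ->
     has_deriv_within I (fun t' => Psihat t' s) t
       ((F t + 2^-1 *: (G t *m (G t)^T *m invmx (Sigma t))) *m Psihat t s)) ->
  (forall s, I s -> Psihat s s = 1%:M) ->
  (* P_{s tau} solves dP/dtau = Fhat P + P Fhat^T with P_{ss} = 0 *)
  (forall s tau, I s -> I tau ->
     has_deriv_within I (P s) tau
       ((F tau + 2^-1 *: (G tau *m (G tau)^T *m invmx (Sigma tau))) *m P s tau
        + P s tau *m (F tau + 2^-1 *: (G tau *m (G tau)^T *m invmx (Sigma tau)))^T)) ->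
  (forall s, I s -> P s s = 0) ->
  forall s t, I s -> I t -> forall (u eps : 'cV[R]_D),
    P s t = 0 /\
    Psi t s *m u + (Psihat t s - Psi t s) *m Rm s *m eps =
    Psi t s *m u +
      mxint s t (fun tau => 2^-1 *: (Psi t tau *m G tau *m (G tau)^T
                                     *m (invmx (Rm tau))^T)) *m eps.
Proof.
move=> Fc Gc HPsi HPsi1 HSig HI HIT Hpd HRu HRR HRd HFhc HPh HPh1 HP HP0 s t Is It u eps.
pose Fh : R -> 'M[R]_D := fun tau => F tau + 2^-1 *: (G tau *m (G tau)^T *m invmx (Sigma tau)).
pose J0 : set R := `[0, T]%classic.
have HJ0 : is_interval J0.
  move=> x y; rewrite /J0 /= !in_itv /= => /andP[x0 xT] /andP[y0 yT] z /andP[xz zy].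
  by rewrite in_itv /= (le_trans x0 xz) (le_trans zy yT).
have cF : forall x, J0 x -> F @ within J0 (nbhs x) --> F x.
  exact: (proj1 (subspace_continuousP _ _) Fc).
have cG : forall x, J0 x -> G @ within J0 (nbhs x) --> G x.
  exact: (proj1 (subspace_continuousP _ _) Gc).
have cSig : forall x, J0 x -> Sigma @ within J0 (nbhs x) --> Sigma x.
  move=> x Jx; exact: (hdw_wcont (HSig x Jx)).
have uSig : forall x, I x -> Sigma x \in unitmx.
  by move=> x Ix; rewrite -HRR // unitmx_mul unitmx_tr HRu.
have cFh : forall x, I x -> Fh @ within I (nbhs x) --> Fh x.
  move=> x Ix; have J0x := HIT x Ix.
  apply: cvgD; first exact: (within_restrict HIT (cF x J0x)).
  apply: cvgZ; first exact: cvg_cst.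
  apply: cvg_mulmx; first apply: cvg_mulmx.
  - exact: (within_restrict HIT (cG x J0x)).
  - exact: cvg_trmx (within_restrict HIT (cG x J0x)).
  - exact: cvg_invmx (within_restrict HIT (cSig x J0x)) (uSig x Ix).
split.
  have L1 := (ode_lyap (J := I) (A := Fh) (X := P s) HI cFh).
  apply: (L1 _ s t Is It (HP0 s Is)) => y Iy; exact: (HP s y Is Iy).
have T0 : J0 0.
  have := HIT s Is; rewrite /J0 /= !in_itv /= => /andP[s0 sT].
  by rewrite lexx (le_trans s0 sT).
have PsiC : forall r a b, J0 r -> J0 a -> J0 b -> Psi b a = Psi b r *m Psi r a.
  move=> r a b Jr Ja Jb; apply/eqP; rewrite -subr_eq0; apply/eqP.
  have L2 := ode_lin (J := J0) (A := F) (X := fun y => Psi y a - Psi y r *m Psi r a) HJ0 cF.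
  apply: (L2 _ r b Jr Jb).
    move=> y Jy; apply: hdw_eqv (hdwD (HPsi a y Ja Jy) (hdwN (hdw_mulmx (HPsi r y Jr Jy) (hdw_cst _ (Psi r a) y)))).
    by rewrite mulmx0 addr0 mulmxBr mulmxA.
  by rewrite HPsi1 // mul1mx subrr.
have Psi0inv : forall y, J0 y -> Psi y 0 *m Psi 0 y = 1%:M.
  by move=> y Jy; rewrite -PsiC // HPsi1.
have uPsi0 : forall y, J0 y -> Psi y 0 \in unitmx.
  by move=> y Jy; have [] := mulmx1_unit (Psi0inv y Jy).
have iPsi0 : forall y, J0 y -> invmx (Psi y 0) = Psi 0 y.
  move=> y Jy; rewrite -[RHS]mul1mx -(mulVmx (uPsi0 y Jy)) -mulmxA Psi0inv //.
  by rewrite mulmx1.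
have Ra : forall y, I y -> Rm y = Psihat y s *m Rm s.
  move=> y Iy; apply/eqP; rewrite -subr_eq0; apply/eqP.
  have L3 := ode_lin (J := I) (A := Fh) (X := fun y => Rm y - Psihat y s *m Rm s) HI cFh.
  apply: (L3 _ s y Is Iy).
    move=> z Iz; apply: hdw_eqv (hdwD (HRd z Iz) (hdwN (hdw_mulmx (HPh s z Is Iz) (hdw_cst _ (Rm s) z)))).
    by rewrite mulmx0 addr0 mulmxBr mulmxA.
  by rewrite HPh1 // mul1mx subrr.
pose Phi : R -> 'M[R]_D := fun y => Psi t 0 *m invmx (Psi y 0) *m Rm y.
pose g : R -> 'M[R]_D := fun tau => 2^-1 *: (Psi t tau *m G tau *m (G tau)^T *m (invmx (Rm tau))^T).
have Jt0 : J0 t := HIT t It.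
have eSR : forall y, I y -> invmx (Sigma y) *m Rm y = (invmx (Rm y))^T.
  move=> y Iy; rewrite trmx_inv.
  have uRt : (Rm y)^T \in unitmx by rewrite unitmx_tr HRu.
  rewrite -[LHS]mulmx1 -(mulmxV uRt) !mulmxA -[invmx (Sigma y) *m Rm y *m (Rm y)^T]mulmxA HRR //.
  by rewrite mulVmx ?uSig // mul1mx.
have dPhi : forall y, I y -> has_deriv_within I Phi y (g y).
  move=> y Iy; have J0y := HIT y Iy.
  have Hinv := hdw_sub_set HIT (hdw_invmx (uPsi0 y J0y) (HPsi 0 y T0 J0y)).
  apply: hdw_eqv (hdw_mulmx (hdw_mulmx (hdw_cst _ (Psi t 0) y) Hinv) (HRd y Iy)).
  rewrite /g (PsiC 0 y t T0 J0y Jt0) -(iPsi0 y J0y).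
  set V := invmx (Psi y 0); set C := Psi t 0.
  rewrite mul0mx add0r mulmxN mulNmx.
  have e1 : C *m (V *m (F y *m Psi y 0) *m V) *m Rm y = C *m V *m (F y *m Rm y).
    by rewrite !mulmxA -(mulmxA _ (Psi y 0) V) mulmxV ?uPsi0 // mulmx1.
  rewrite e1 mulmxDl mulmxDr addKr -scalemxAl -scalemxAr; congr (_ *: _).
  by rewrite -mulmxA eSR // !mulmxA.
have cg : forall x, I x -> g @ within I (nbhs x) --> g x.
  move=> x Ix; have J0x := HIT x Ix.
  apply: (cvg_near_eqw (g := fun tau => 2^-1 *: (Psi t 0 *m invmx (Psi tau 0) *m G tau *m (G tau)^T *m (invmx (Rm tau))^T)) Ix).
    by move=> y Iy; rewrite /g (PsiC 0 y t T0 (HIT y Iy) Jt0) -(iPsi0 y (HIT y Iy)).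
  have cG' := within_restrict HIT (cG x J0x).
  have FI : Filter (within I (nbhs x)) by exact: within_filter.
  have cIP := cvg_invmx (FF := FI) (within_restrict HIT (hdw_wcont (HPsi 0 x T0 J0x))) (uPsi0 x J0x).
  have cIR := cvg_invmx (FF := FI) (hdw_wcont (HRd x Ix)) (HRu x Ix).
  apply: cvgZ; first exact: cvg_cst.
  exact: (cvg_mulmx (cvg_mulmx (cvg_mulmx (cvg_mulmx (cvg_cst (Psi t 0)) cIP) cG') (cvg_trmx cG')) (cvg_trmx cIR)).
have Hm := ftc_mxint HI Is It dPhi cg.
rewrite (_ : mxint _ _ _ = Phi t - Phi s); last exact: Hm.
rewrite /Phi mulmxV ?uPsi0 // mul1mx (iPsi0 s (HIT s Is)) -PsiC //; last exact: HIT.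
by rewrite (Ra t It) mulmxBl.
Qed.
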